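(* Let $\rho^{AB}$ be a density matrix on $\mathcal{H}_A\otimes\mathcal{H}_B$ with $\dim\mathcal{H}_A=n$ and let $o>0$. Suppose the gambler chooses measurement operators $\{F_j^B\}_{j=1}^m$ on $B$ ($\sum_j(F_j^B)^\dagger F_j^B=\mathbb{1}$, $m$ arbitrary), learns the outcome $j$ (probability $\beta_j=\mathrm{Tr}\,\rho^{AB}(\mathbb{1}\otimes(F_j^B)^\dagger F_j^B)$), after which $A$ is in state $\rho_j^A=\frac1{\beta_j}\mathrm{Tr}_B\,\rho^{AB}(\mathbb{1}\otimes(F_j^B)^\dagger F_j^B)$; she then chooses an orthonormal projective measurement $\{E_{ij}^A\}_{i=1}^n$ on $A$ and a betting vector depending on $j$, with uniform odds $o$-for-1 and all wealth bet. Let $W_{A|B}^{**}$ be the optimal (supremal) doubling rate of this protocol and $W_A^{**}=\log_2 o-S(A)_\rho$ the optimal doubling rate without help. Then $$W_{A|B}^{**}-W_A^{**}=\sup_{\{F_j^B\}}\Big[S(\rho^A)-\sum_{j}\beta_j S(\rho_j^A)\Big],$$ i.e. $W_{A|B}^{**}=\log_2 o-\inf_{\{F_j^B\}}\sum_j\beta_jS(\rho_j^A)$.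
   Context: The doubling rate of the protocol is $\sum_j\beta_j\sum_i \alpha_{i|j}\log_2(q_{i|j}o)$ where $\alpha_{i|j}=\mathrm{Tr}\,\rho_j^AE_{ij}^A$ and $q_{i|j}$ is the fraction of wealth bet on outcome $i$ given $j$ ($q_{i|j}\ge0$, $\sum_iq_{i|j}=1$). $S(\rho)=-\mathrm{Tr}\rho\log_2\rho$ is the von Neumann entropy; $\rho^A=\mathrm{Tr}_B\rho^{AB}$. *)

(* Defs.v *)
From Stdlib Require Import Reals Lra Lia Arith ClassicalEpsilon.
Open Scope R_scope.

Record C := mkC { Cre : R; Cim : R }.
Definition C0 : C := mkC 0 0.
Definition C1 : C := mkC 1 0.
Definition RtoC (r : R) : C := mkC r 0.
Definition Cadd (x y : C) : C := mkC (Cre x + Cre y) (Cim x + Cim y).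
Definition Cmul (x y : C) : C :=
  mkC (Cre x * Cre y - Cim x * Cim y) (Cre x * Cim y + Cim x * Cre y).
Definition Cconj (x : C) : C := mkC (Cre x) (- Cim x).

Fixpoint csum (n : nat) (f : nat -> C) : C :=
  match n with O => C0 | S k => Cadd (csum k f) (f k) end.
Fixpoint rsum (n : nat) (f : nat -> R) : R :=
  match n with O => 0 | S k => rsum k f + f k end.

(** * Matrices: entries A i j, only indices < dimension are meaningful *)
Definition Mat := nat -> nat -> C.
Definition meq (n : nat) (A B : Mat) : Prop :=
  forall i j, (i < n)%nat -> (j < n)%nat -> A i j = B i j.
Definition mmul (n : nat) (A B : Mat) : Mat :=
  fun i j => csum n (fun k => Cmul (A i k) (B k j)).
Definition adj (A : Mat) : Mat := fun i j => Cconj (A j i).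
Definition idm : Mat := fun i j => if Nat.eqb i j then C1 else C0.
Definition mscale (r : R) (A : Mat) : Mat := fun i j => Cmul (RtoC r) (A i j).
Definition msum (m : nat) (M : nat -> Mat) : Mat := fun i k => csum m (fun j => M j i k).
Definition trace (n : nat) (A : Mat) : C := csum n (fun i => A i i).
Definition diag (l : nat -> R) : Mat := fun i j => if Nat.eqb i j then RtoC (l i) else C0.

(** Tensor product H_A (x) H_B with dim H_B = d: index (a,b) <-> a*d+b *)
Definition kron (d : nat) (A B : Mat) : Mat :=
  fun i j => Cmul (A (i / d)%nat (j / d)%nat) (B (i mod d)%nat (j mod d)%nat).
Definition ptraceB (d : nat) (X : Mat) : Mat :=
  fun a a' => csum d (fun b => X (a * d + b)%nat (a' * d + b)%nat).

Definition hermitian (n : nat) (A : Mat) : Prop := meq n (adj A) A.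
Definition psd (n : nat) (A : Mat) : Prop :=
  hermitian n A /\
  forall v : nat -> C,
    0 <= Cre (csum n (fun i => Cmul (Cconj (v i)) (csum n (fun j => Cmul (A i j) (v j))))).
Definition density (n : nat) (A : Mat) : Prop := psd n A /\ trace n A = C1.
Definition unitary (n : nat) (U : Mat) : Prop := meq n (mmul n (adj U) U) idm.

Definition log2 (x : R) : R := ln x / ln 2.
(** eta x = - x log2 x, with the convention 0 log 0 = 0 *)
Definition eta (x : R) : R := if Rle_dec x 0 then 0 else - (x * log2 x).

Definition is_vn_entropy (n : nat) (rho : Mat) (s : R) : Prop :=
  exists (U : Mat) (l : nat -> R),
    unitary n U /\ meq n rho (mmul n U (mmul n (diag l) (adj U))) /\
    s = rsum n (fun k => eta (l k)).
Definition vN_entropy (n : nat) (rho : Mat) : R :=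
  epsilon (inhabits 0) (is_vn_entropy n rho).

Definition meas_ops (d m : nat) (F : nat -> Mat) : Prop :=
  meq d (msum m (fun j => mmul d (adj (F j)) (F j))) idm.

Definition rhoA (d : nat) (rho : Mat) : Mat := ptraceB d rho.

Definition post (n d : nat) (rho : Mat) (F : nat -> Mat) (j : nat) : Mat :=
  mmul (n * d)%nat rho (kron d idm (mmul d (adj (F j)) (F j))).
Definition beta (n d : nat) (rho : Mat) (F : nat -> Mat) (j : nat) : R :=
  Cre (trace (n * d)%nat (post n d rho F j)).
Definition rhoA_j (n d : nat) (rho : Mat) (F : nat -> Mat) (j : nat) : Mat :=
  mscale (/ beta n d rho F j) (ptraceB d (post n d rho F j)).

(** orthonormal basis e i (vector with components e i k), i < n *)
Definition onb (n : nat) (e : nat -> nat -> C) : Prop :=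
  forall i i', (i < n)%nat -> (i' < n)%nat ->
    csum n (fun k => Cmul (Cconj (e i k)) (e i' k)) = (if Nat.eqb i i' then C1 else C0).
Definition proj (e : nat -> nat -> C) (i : nat) : Mat :=
  fun k l => Cmul (e i k) (Cconj (e i l)).

(** alpha_{i|j} = Tr rho_j^A E_{ij}^A ; e j is the basis chosen after outcome j *)
Definition alpha (n d : nat) (rho : Mat) (F : nat -> Mat) (e : nat -> nat -> nat -> C)
  (i j : nat) : R :=
  Cre (trace n (mmul n (rhoA_j n d rho F j) (proj (e j) i))).

(** doubling rate sum_j beta_j sum_i alpha_{i|j} log2 (q_{i|j} o) ; q i j = q_{i|j} *)
Definition doubling_rate (n d : nat) (rho : Mat) (o : R) (m : nat) (F : nat -> Mat)
  (e : nat -> nat -> nat -> C) (q : nat -> nat -> R) : R :=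
  rsum m (fun j => beta n d rho F j *
    rsum n (fun i => alpha n d rho F e i j * log2 (q i j * o))).

Definition betting (n m : nat) (q : nat -> nat -> R) : Prop :=
  (forall i j, (i < n)%nat -> (j < m)%nat -> 0 <= q i j) /\
  (forall j, (j < m)%nat -> rsum n (fun i => q i j) = 1).

(** strategies with finite doubling rate (no zero bet on an outcome of positive probability);
    the others have doubling rate -infinity and do not affect the supremum *)
Definition finite_rate (n d : nat) (rho : Mat) (m : nat) (F : nat -> Mat)
  (e : nat -> nat -> nat -> C) (q : nat -> nat -> R) : Prop :=
  forall i j, (i < n)%nat -> (j < m)%nat ->
    0 < beta n d rho F j * alpha n d rho F e i j -> 0 < q i j.

Definition RateSet (n d : nat) (rho : Mat) (o : R) (W : R) : Prop :=
  exists (m : nat) (F : nat -> Mat) (e : nat -> nat -> nat -> C) (q : nat -> nat -> R),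
    meas_ops d m F /\ (forall j, (j < m)%nat -> onb n (e j)) /\ betting n m q /\
    finite_rate n d rho m F e q /\ W = doubling_rate n d rho o m F e q.

Definition GainSet (n d : nat) (rho : Mat) (G : R) : Prop :=
  exists (m : nat) (F : nat -> Mat),
    meas_ops d m F /\
    G = vN_entropy n (rhoA d rho)
        - rsum m (fun j => beta n d rho F j * vN_entropy n (rhoA_j n d rho F j)).

Definition W_A_star (n d : nat) (rho : Mat) (o : R) : R :=
  log2 o - vN_entropy n (rhoA d rho).

(* Main.v *)
Set Warnings "-notation-overridden,-ambiguous-paths,-parsing,-deprecated,-notation-incompatible-prefix".
Require Import Defs.
From Stdlib Require Import Reals Lra Lia ClassicalEpsilon.
From HB Require Import structures.
From mathcomp Require Import all_boot all_order all_algebra.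
From mathcomp Require Import Rstruct complex.
From mathcomp Require Import spectral sesquilinear.
Set Implicit Arguments. Unset Strict Implicit. Unset Printing Implicit Defensive.

Module Part6.
Local Unset Implicit Arguments.
Local Open Scope R_scope.

Lemma ln_le_m1 x : 0 < x -> ln x <= x - 1.
Proof. move=> h; have := exp_ineq1_le (ln x); rewrite exp_ln //; lra. Qed.

Lemma ln2_pos : 0 < ln 2.
Proof. have := ln_lt_2; lra. Qed.

Lemma T1 P l a : 0 <= P -> 0 <= l -> 0 <= a -> P * l <= a ->
  P * l - P * a <= P * l * (ln l - ln a).
Proof.
move=> hP hl ha hle.
destruct (Rle_lt_or_eq_dec 0 (P * l)) as [hpl|hpl]; first by apply: Rmult_le_pos.
- have lpos : 0 < l.
    destruct (Rle_lt_or_eq_dec 0 l hl) as [h|h]; first exact h.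
    rewrite -h Rmult_0_r in hpl; lra.
  have apos : 0 < a by lra.
  have := ln_le_m1 (a / l) ltac:(apply: Rdiv_lt_0_compat; lra).
  rewrite /Rdiv (ln_mult a (/l) apos (Rinv_0_lt_compat _ lpos)) (ln_Rinv _ lpos).
  move=> h.
  have e : P * l * (a * / l) = P * a by field; lra.
  have := Rmult_le_compat_l (P * l) _ _ (Rlt_le _ _ hpl) h.
  rewrite Rmult_minus_distr_l e Rmult_1_r; lra.
- rewrite -hpl; have : 0 <= P * a by apply: Rmult_le_pos.
  lra.
Qed.

Lemma T2 a q : 0 <= a -> 0 <= q -> (0 < a -> 0 < q) -> a * (ln q - ln a) <= q - a.
Proof.
move=> ha hq hi.
destruct (Rle_lt_or_eq_dec 0 a ha) as [h|h].
- have qpos := hi h.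
  have := ln_le_m1 (q / a) ltac:(apply: Rdiv_lt_0_compat; lra).
  rewrite /Rdiv (ln_mult q (/a) qpos (Rinv_0_lt_compat _ h)) (ln_Rinv _ h).
  move=> h2; have := Rmult_le_compat_l a _ _ ha h2.
  have e : a * (q * / a) = q by field; lra.
  rewrite Rmult_minus_distr_l e; lra.
- rewrite -h; lra.
Qed.

Lemma T3 a q o : 0 <= a -> 0 < o -> (0 < a -> 0 < q) ->
  a * Defs.log2 (q * o) = (a * ln q + a * ln o) / ln 2.
Proof.
move=> ha ho hi; rewrite /Defs.log2.
destruct (Rle_lt_or_eq_dec 0 a ha) as [h|h].
- rewrite (ln_mult q o (hi h) ho). field; have := ln2_pos; lra.
- rewrite -h; have := ln2_pos => ?; field; lra.
Qed.

Lemma T4 x : 0 <= x -> Defs.eta x = - (x * ln x) / ln 2.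
Proof.
move=> hx; rewrite /Defs.eta /Defs.log2; destruct (Rle_dec x 0) as [h|h].
- have -> : x = 0 by lra. have := ln2_pos => ?; field; lra.
- have := ln2_pos => ?; field; lra.
Qed.

Lemma T5 x o : 0 <= x -> 0 < o -> x * Defs.log2 (x * o) = x * Defs.log2 o - Defs.eta x.
Proof.
move=> hx ho; rewrite /Defs.eta /Defs.log2; destruct (Rle_dec x 0) as [h|h].
- have -> : x = 0 by lra. lra.
- rewrite (ln_mult x o ltac:(lra) ho). have := ln2_pos => ?; field; lra.
Qed.

Lemma rsum_const n c : rsum n (fun _ => c) = INR n * c.
Proof. elim: n => [|n IH]; first by rewrite /= Rmult_0_l. rewrite [rsum _ _]/= IH S_INR; ring. Qed.

Lemma n_pos n d rho : density (n * d)%nat rho -> (0 < n)%coq_nat.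
Proof.
move=> [_ ht]; destruct n as [|n]; last by apply: Nat.lt_0_succ.
move: ht; rewrite mul0n /trace /=; rewrite /C0 /C1 => h; injection h; lra.
Qed.

End Part6.
Import Part6.

From mathcomp Require Import ring.
Module Part1.
Import Order.TTheory GRing.Theory Num.Theory.
Local Open Scope ring_scope. Local Open Scope complex_scope. Local Open Scope ring_scope.

Notation CC := (R[i]).
Definition tc (z : Defs.C) : CC := Complex (Cre z) (Cim z).
Definition ofc (z : CC) : Defs.C := mkC (complex.Re z) (complex.Im z).
Lemma tcK z : ofc (tc z) = z. Proof. by case: z. Qed.
Lemma ofcK z : tc (ofc z) = z. Proof. by case: z. Qed.
Lemma tc_inj : injective tc. Proof. exact: can_inj tcK. Qed.

Lemma tc_add x y : tc (Cadd x y) = tc x + tc y. Proof. by case: x; case: y. Qed.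
Lemma tc_mul x y : tc (Cmul x y) = tc x * tc y. Proof. by case: x; case: y. Qed.
Lemma tc0 : tc Defs.C0 = 0. Proof. by []. Qed.
Lemma tc1 : tc Defs.C1 = 1. Proof. by []. Qed.
Lemma tcR r : tc (RtoC r) = r%:C. Proof. by []. Qed.

Lemma conjC_complex (a b : R) : (Complex a b : CC)^* = Complex a (- b).
Proof.
have -> : (Complex a b : CC) = a%:C + 'i * b%:C.
  by apply/eqP; rewrite eq_complex /= ?mul0r ?mul1r ?mulr0 ?subr0 ?addr0 ?add0r ?eqxx.
rewrite rmorphD rmorphM /= conjCi !conj_Creal ?complex_real //.
apply/eqP; rewrite eq_complex /=.
by rewrite oppr0 ?mul0r ?mulr0 ?subr0 ?addr0 ?add0r ?mulN1r ?eqxx.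
Qed.
Lemma tc_conj x : tc (Cconj x) = (tc x)^*. Proof. by case: x => a b; rewrite conjC_complex. Qed.

Lemma tc_csum n f : tc (csum n f) = \sum_(i < n) tc (f i).
Proof. elim: n => [|n IH] /=; first by rewrite big_ord0. by rewrite tc_add IH big_ord_recr. Qed.
Lemma rsumE n f : rsum n f = \sum_(i < n) f i.
Proof. elim: n => [|n IH] /=; first by rewrite big_ord0. by rewrite IH big_ord_recr. Qed.
Lemma Re_tc z : complex.Re (tc z) = Cre z. Proof. by []. Qed.
Lemma Re_add (x y : CC) : complex.Re (x + y) = complex.Re x + complex.Re y. Proof. by case: x; case: y. Qed.
Lemma Re_sum (I : Type) (r : seq I) P (f : I -> CC) :
  complex.Re (\sum_(i <- r | P i) f i) = \sum_(i <- r | P i) complex.Re (f i).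
Proof. exact: (big_morph _ Re_add). Qed.


End Part1.
Import Part1.

Module Part2.
Import Order.TTheory GRing.Theory Num.Theory.
Local Open Scope ring_scope. Local Open Scope complex_scope. Local Open Scope ring_scope.
Local Open Scope sesquilinear_scope.

Definition mx n (A : Mat) : 'M[CC]_n := \matrix_(i < n, j < n) tc (A i j).
Definition unmx n (M : 'M[CC]_n) : Mat := fun i j =>
  match (insub i : option 'I_n), (insub j : option 'I_n) with
  | Some i', Some j' => ofc (M i' j') | _, _ => Defs.C0 end.
Lemma unmxK n M : mx n (unmx M) = M.
Proof. by apply/matrixP => i j; rewrite mxE /unmx !valK ofcK. Qed.

Lemma mx_mmul n A B : mx n (mmul n A B) = mx n A *m mx n B.
Proof.
apply/matrixP => i j; rewrite !mxE /mmul tc_csum.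
by apply: eq_bigr => k _; rewrite tc_mul !mxE.
Qed.
Lemma mx_adj n A : mx n (adj A) = (mx n A)^t*.
Proof. by apply/matrixP => i j; rewrite !mxE /adj tc_conj. Qed.
Lemma mx_idm n : mx n idm = 1%:M.
Proof.
apply/matrixP => i j; rewrite !mxE /idm.
by case: (eqVneq i j) => [->|/negbTE h]; rewrite ?Nat.eqb_refl // (proj2 (Nat.eqb_neq _ _)) //; apply/eqP; rewrite -val_eqE /= in h; rewrite h.
Qed.
Lemma meqP n A B : meq n A B <-> mx n A = mx n B.
Proof.
split=> [h|h]; first by apply/matrixP => i j; rewrite !mxE h //; exact/ssrnat.ltP.
move=> i j /ssrnat.ltP hi /ssrnat.ltP hj; move/matrixP: h => /(_ (Ordinal hi) (Ordinal hj)).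
by rewrite !mxE => /tc_inj.
Qed.
Lemma mx_diag n l : mx n (diag l) = diag_mx (\row_(k < n) (l k)%:C).
Proof.
apply/matrixP => i j; rewrite !mxE /diag.
case: (eqVneq i j) => [->|h]; first by rewrite Nat.eqb_refl.
rewrite (proj2 (Nat.eqb_neq _ _)); last by move=> e; move/negP: h; apply; apply/eqP/val_inj.
by [].
Qed.
Lemma unitaryP n U : unitary n U <-> (mx n U)^t* *m mx n U = 1%:M.
Proof. by rewrite /unitary meqP mx_mmul mx_adj mx_idm. Qed.
Lemma hermitianP n A : Defs.hermitian n A <-> (mx n A)^t* = mx n A.
Proof. by rewrite /Defs.hermitian meqP mx_adj. Qed.

Lemma spectral_exists n A : Defs.hermitian n A ->
  exists U l, unitary n U /\ meq n A (mmul n U (mmul n (diag l) (adj U))).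
Proof.
move=> /hermitianP hA.
have hs : mx n A \is hermsymmx.
  apply/is_hermitianmxP; rewrite expr0 scale1r.
  by rewrite hA.
have hn := hermitian_normalmx hs.
have hr := hermitian_spectral_diag_real hs.
move: (spectral_unitarymx (mx n A)) => hu.
move/orthomx_spectralP: hn; rewrite invmx_unitary // => eA.
set P := spectralmx (mx n A) in eA hu *; set sp := spectral_diag (mx n A) in eA hr *.
pose l k := if (insub k : option 'I_n) is Some k' then complex.Re (sp 0 k') else 0%R.
exists (unmx (P^t*)), l; split.
  apply/unitaryP; rewrite unmxK trmxCK; exact/unitarymxP.
apply/meqP; rewrite !mx_mmul mx_adj mx_diag unmxK trmxCK mulmxA {1}eA.
congr (_ *m _ *m _); congr diag_mx; apply/matrixP => i k; rewrite !mxE ord1 /l valK.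
by rewrite RRe_real //; move/mxOverP: hr; apply.
Qed.

End Part2.
Import Part2.

Module Part3.
Import Order.TTheory GRing.Theory Num.Theory.
Local Open Scope ring_scope. Local Open Scope complex_scope. Local Open Scope ring_scope.
Local Open Scope sesquilinear_scope.

Lemma sum_split (V : nmodType) n d (f : nat -> V) :
  \sum_(k < n * d) f k = \sum_(a < n) \sum_(b < d) f (a * d + b)%N.
Proof.
elim: n => [|n IH]; first by rewrite mul0n !big_ord0.
rewrite big_ord_recr /= -IH mulSnr big_split_ord /=.
by congr (_ + _); apply: eq_bigr => i _.
Qed.

Lemma kdiv a d b : (b < d)%N -> Nat.div (a * d + b) d = a /\ Nat.modulo (a * d + b) d = b.
Proof.
move=> /ssrnat.ltP h; split.
  symmetry; apply: (Nat.div_unique _ _ _ b) => //; rewrite /muln /addn /=; lia.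
symmetry; apply: (Nat.mod_unique _ _ a) => //; rewrite /muln /addn /=; lia.
Qed.

Lemma tc_idm i j : tc (idm i j) = (i == j)%:R.
Proof.
rewrite /idm; case: (eqVneq i j) => [->|h]; first by rewrite Nat.eqb_refl.
by rewrite (proj2 (Nat.eqb_neq _ _)) //; apply/eqP.
Qed.

Definition Mop d (G : Mat) : Mat := mmul d (adj G) G.
Definition sig d rho G (a a' : nat) : CC :=
  \sum_(b < d) \sum_(b' < d) tc (rho (a * d + b)%N (a' * d + b')%N) * tc (Mop d G b' b).

Lemma post_entry n d rho F j i a' b : (a' < n)%N -> (b < d)%N ->
  tc (post n d rho F j i (a' * d + b)%N) =
  \sum_(b' < d) tc (rho i (a' * d + b')%N) * tc (Mop d (F j) b' b).
Proof.
move=> ha hb; rewrite /post /mmul tc_csum.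
rewrite (@sum_split _ n d (fun k => tc (Cmul (rho i k) (kron d idm (Mop d (F j)) k (a' * d + b)%N)))).
rewrite (bigD1 (Ordinal ha)) //= [X in _ + X]big1 ?addr0.
  apply: eq_bigr => b' _; rewrite tc_mul /kron tc_mul.
  case: (kdiv a' hb) => -> ->; case: (kdiv a' (ltn_ord b')) => -> ->.
  by rewrite tc_idm eqxx mul1r.
move=> a'' hne; apply: big1 => b' _; rewrite tc_mul /kron tc_mul.
case: (kdiv a' hb) => -> _; case: (kdiv a'' (ltn_ord b')) => -> _.
rewrite tc_idm; case: eqP => [e|]; last by rewrite mul0r mulr0.
by move/negP: hne; case; apply/eqP/val_inj.
Qed.

Lemma ptrace_post n d rho F j a a' : (a' < n)%N ->
  tc (ptraceB d (post n d rho F j) a a') = sig d rho (F j) a a'.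
Proof.
move=> ha; rewrite /ptraceB tc_csum; apply: eq_bigr => b _.
by rewrite post_entry.
Qed.

Lemma idx_lt n d a b : (a < n)%N -> (b < d)%N -> (a * d + b < n * d)%N.
Proof.
move=> ha hb; apply: (@leq_trans (a * d + d)); first by rewrite ltn_add2l.
by rewrite -mulSnr leq_mul2r ha orbT.
Qed.

Lemma tc_Mop d G b b' : tc (Mop d G b b') = \sum_(c < d) (tc (G c b))^* * tc (G c b').
Proof. by rewrite /Mop /mmul tc_csum; apply: eq_bigr => c _; rewrite tc_mul /adj tc_conj. Qed.

Lemma Mop_herm d G b b' : (tc (Mop d G b b'))^* = tc (Mop d G b' b).
Proof.
rewrite !tc_Mop rmorph_sum; apply: eq_bigr => c _.
by rewrite rmorphM /= conjCK mulrC.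
Qed.

Definition rherm N rho := forall i k, (i < N)%N -> (k < N)%N -> (tc (rho i k))^* = tc (rho k i).

Lemma sig_herm n d rho G a a' : rherm (n * d) rho -> (a < n)%N -> (a' < n)%N ->
  (sig d rho G a' a)^* = sig d rho G a a'.
Proof.
move=> hr ha ha'; rewrite /sig rmorph_sum exchange_big /=; apply: eq_bigr => b _.
rewrite rmorph_sum; apply: eq_bigr => b' _.
by rewrite rmorphM /= Mop_herm hr // idx_lt.
Qed.

Lemma beta_sig n d rho F j : beta n d rho F j = \sum_(a < n) complex.Re (sig d rho (F j) a a).
Proof.
rewrite /beta -Re_tc /trace tc_csum (@sum_split _ n d (fun i => tc (post n d rho F j i i))) Re_sum.
apply: eq_bigr => a _; rewrite /sig Re_sum Re_sum; apply: eq_bigr => b _.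
by rewrite post_entry // Re_sum.
Qed.

Lemma rhoAj_entry n d rho F j a a' : (a' < n)%N ->
  tc (rhoA_j n d rho F j a a') = (/ beta n d rho F j)%:C * sig d rho (F j) a a'.
Proof. by move=> ha; rewrite /rhoA_j /mscale tc_mul tcR ptrace_post. Qed.

End Part3.
Import Part3.

Module Part4.
Import Order.TTheory GRing.Theory Num.Theory.
Local Open Scope ring_scope. Local Open Scope complex_scope. Local Open Scope ring_scope.
Local Open Scope sesquilinear_scope.

Definition wv d (G : Mat) (v : nat -> CC) c k : CC := (tc (G c (Nat.modulo k d)))^* * v (Nat.div k d).

Lemma sig_form n d rho G (v : nat -> CC) :
  \sum_(a < n) \sum_(a' < n) (v a)^* * sig d rho G a a' * v a' =
  \sum_(c < d) \sum_(i < n * d) (wv d G v c i)^* * \sum_(k < n * d) tc (rho i k) * wv d G v c k.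
Proof.
transitivity (\sum_(a < n) \sum_(b < d) \sum_(a' < n) \sum_(b' < d)
   (v a)^* * tc (rho (a * d + b)%N (a' * d + b')%N) * v a' * tc (Mop d G b' b)).
  apply: eq_bigr => a _.
  transitivity (\sum_(a' < n) \sum_(b < d) \sum_(b' < d)
   (v a)^* * tc (rho (a * d + b)%N (a' * d + b')%N) * v a' * tc (Mop d G b' b)).
    apply: eq_bigr => a' _; rewrite /sig mulr_sumr mulr_suml; apply: eq_bigr => b _.
    rewrite mulr_sumr mulr_suml; apply: eq_bigr => b' _.
    by ring.
  by rewrite exchange_big.
symmetry.
transitivity (\sum_(c < d) \sum_(a < n) \sum_(b < d) \sum_(a' < n) \sum_(b' < d)
   (tc (G c b) * (v a)^*) * (tc (rho (a * d + b)%N (a' * d + b')%N) * ((tc (G c b'))^* * v a'))).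
  apply: eq_bigr => c _.
  rewrite (@sum_split _ n d (fun i => (wv d G v c i)^* * \sum_(k < n * d) tc (rho i k) * wv d G v c k)).
  apply: eq_bigr => a _; apply: eq_bigr => b _.
  rewrite (@sum_split _ n d (fun k => tc (rho _ k) * wv d G v c k)) mulr_sumr.
  apply: eq_bigr => a' _; rewrite mulr_sumr; apply: eq_bigr => b' _.
  rewrite /wv; case: (kdiv a (ltn_ord b)) => -> ->; case: (kdiv a' (ltn_ord b')) => -> ->.
  by rewrite rmorphM /= conjCK.
rewrite exchange_big; apply: eq_bigr => a _.
rewrite exchange_big; apply: eq_bigr => b _.
rewrite exchange_big; apply: eq_bigr => a' _.
rewrite exchange_big; apply: eq_bigr => b' _.
rewrite tc_Mop mulr_sumr; apply: eq_bigr => c _.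
by ring.
Qed.

Lemma psd_form N rho (w : nat -> CC) : psd N rho ->
  (0 <= complex.Re (\sum_(i < N) (w i)^* * \sum_(k < N) tc (rho i k) * w k))%R.
Proof.
case=> _ /(_ (fun i => ofc (w i))) h; apply/RleP.
move: h; rewrite -Re_tc tc_csum.
have -> // : \sum_(i < N) tc (Cmul (Cconj (ofc (w i))) (csum N (fun j => Cmul (rho i j) (ofc (w j))))) =
  \sum_(i < N) (w i)^* * \sum_(k < N) tc (rho i k) * w k.
apply: eq_bigr => i _; rewrite tc_mul tc_conj ofcK tc_csum; congr (_ * _).
by apply: eq_bigr => k _; rewrite tc_mul ofcK.
Qed.

Lemma sig_psd n d rho G (v : nat -> CC) : psd (n * d) rho ->
  (0 <= complex.Re (\sum_(a < n) \sum_(a' < n) (v a)^* * sig d rho G a a' * v a'))%R.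
Proof.
move=> h; rewrite sig_form Re_sum; apply: sumr_ge0 => c _; exact: psd_form.
Qed.

Lemma rherm_psd N rho : psd N rho -> rherm N rho.
Proof.
case=> h _ i k hi hk; rewrite -tc_conj; congr tc.
have := h k i (ssrnat.ltP hk) (ssrnat.ltP hi); rewrite /adj => <-.
by case: (rho i k).
Qed.

Lemma sum_delta (V : nmodType) n a (f : nat -> V) : (a < n)%N ->
  \sum_(x < n) (if (x == a :> nat) then f x else 0) = f a.
Proof.
move=> ha; rewrite (bigD1 (Ordinal ha)) //= eqxx big1 ?addr0 // => x hne.
by rewrite (_ : (x == a :> nat) = false) //; apply/negbTE; apply: contra hne => /eqP e; apply/eqP/val_inj.
Qed.

Lemma Re_sig_ge0 n d rho G a : psd (n * d) rho -> (a < n)%N -> (0 <= complex.Re (sig d rho G a a))%R.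
Proof.
move=> h ha; have := sig_psd G (fun x => (x == a)%:R) h.
have -> : \sum_(a0 < n) \sum_(a' < n) ((nat_of_ord a0 == a)%:R)^* * sig d rho G a0 a' * (nat_of_ord a' == a)%:R
   = \sum_(a0 < n) (if (a0 == a :> nat) then sig d rho G a a else 0).
  apply: eq_bigr => a0 _; case: eqP => [->|_]; last by apply: big1 => x _; rewrite rmorph0 !mul0r.
  rewrite -(@sum_delta _ n a (fun x => sig d rho G a x)) //.
  apply: eq_bigr => x _; rewrite (_ : true%:R^* = 1 :> CC) ?mul1r; last exact: conjC1.
  by case: eqP; rewrite ?mulr1 ?mulr0.
by rewrite (@sum_delta _ n a (fun _ => sig d rho G a a)).
Qed.

Lemma beta_ge0 n d rho F j : psd (n * d) rho -> (0 <= beta n d rho F j)%R.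
Proof.
move=> h; rewrite beta_sig; apply: sumr_ge0 => a _; exact: (Re_sig_ge0 _ h (ltn_ord a)).
Qed.

Lemma sum_beta n d rho m F : density (n * d) rho -> meas_ops d m F ->
  rsum m (beta n d rho F) = 1%R.
Proof.
move=> [hp ht] hm; rewrite rsumE.
under eq_bigr do rewrite beta_sig.
rewrite exchange_big /=.
have hM : forall b b', (b < d)%N -> (b' < d)%N -> \sum_(j < m) tc (Mop d (F j) b' b) = (b' == b)%:R.
  move=> b b' hb hb'; have := hm b' b (ssrnat.ltP hb') (ssrnat.ltP hb).
  move=> e; rewrite -tc_idm -e /msum tc_csum; by apply: eq_bigr.
transitivity (complex.Re (\sum_(i < n * d) tc (rho i i))); last by rewrite -(@tc_csum (n * d) (fun i => rho i i)); change (csum _ _) with (trace (n * d) rho); rewrite ht.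
rewrite (@sum_split _ n d (fun i => tc (rho i i))) Re_sum; apply: eq_bigr => a _.
rewrite -Re_sum; congr complex.Re.
rewrite /sig exchange_big /=; apply: eq_bigr => b _.
rewrite exchange_big /=.
transitivity (\sum_(b' < d) (if (nat_of_ord b' == b :> nat) then tc (rho (a * d + b)%N (a * d + b)%N) else 0)).
  apply: eq_bigr => b' _; rewrite -mulr_sumr hM //.
  by case: eqP => [->|]; rewrite ?mulr1 ?mulr0.
by rewrite (@sum_delta _ d b (fun _ => tc (rho (a * d + b)%N (a * d + b)%N))).
Qed.

End Part4.
Import Part4.

Module Part5.
Import Order.TTheory GRing.Theory Num.Theory.
Local Open Scope ring_scope. Local Open Scope complex_scope. Local Open Scope ring_scope.
Local Open Scope sesquilinear_scope.

Definition Emx n (e : nat -> nat -> CC) : 'M[CC]_n := \matrix_(k < n, i < n) e i k.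

Lemma onbP n e : onb n e <-> (Emx n (fun i k => tc (e i k)))^t* *m Emx n (fun i k => tc (e i k)) = 1%:M.
Proof.
split=> [h|h].
  apply/matrixP => i i'; rewrite !mxE.
  have := h i i' (ssrnat.ltP (ltn_ord i)) (ssrnat.ltP (ltn_ord i')) => /(congr1 tc).
  rewrite tc_csum => e'; transitivity (tc (idm i i')); last by rewrite tc_idm.
  rewrite /idm -e'; by apply: eq_bigr => k _; rewrite tc_mul tc_conj !mxE.
move=> i i' /ssrnat.ltP hi /ssrnat.ltP hi'; apply: tc_inj.
move/matrixP: h => /(_ (Ordinal hi) (Ordinal hi')); rewrite !mxE => e'.
rewrite tc_csum; transitivity (tc (idm i i')); last by [].
rewrite tc_idm; transitivity ((Ordinal hi == Ordinal hi')%:R : CC); last by [].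
rewrite -e'; by apply: eq_bigr => k _; rewrite tc_mul tc_conj !mxE.
Qed.

Lemma alpha_mx n A (e : nat -> nat -> Defs.C) (i : 'I_n) :
  tc (trace n (mmul n A (proj e i))) =
  ((Emx n (fun i k => tc (e i k)))^t* *m mx n A *m Emx n (fun i k => tc (e i k))) i i.
Proof.
rewrite /trace tc_csum !mxE; under [RHS]eq_bigr do rewrite !mxE mulr_suml.
rewrite exchange_big /=; apply: eq_bigr => k _; rewrite /mmul tc_csum; apply: eq_bigr => l _.
by rewrite /proj !tc_mul tc_conj !mxE; ring.
Qed.

Lemma unitary_sym n (M : 'M[CC]_n) : M^t* *m M = 1%:M -> M *m M^t* = 1%:M.
Proof. exact: mulmx1C. Qed.

End Part5.
Import Part5.


Module Part7.
Import Order.TTheory GRing.Theory Num.Theory.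
Local Open Scope ring_scope.

Section Ent.
Variables (n : nat) (P : 'I_n -> 'I_n -> R) (l q : 'I_n -> R) (o : R).
Hypotheses (ho : (0 < o)%R) (hP : forall i k, 0 <= P i k)
  (hrow : forall i, \sum_k P i k = 1) (hcol : forall k, \sum_i P i k = 1)
  (hl : forall k, 0 <= l k) (hls : \sum_k l k = 1)
  (hq : forall i, 0 <= q i) (hqs : \sum_i q i = 1)
  (hpos : forall i, 0 < \sum_k P i k * l k -> 0 < q i).

Let al i := \sum_k P i k * l k.

Lemma al_ge0 i : 0 <= al i.
Proof. by apply: sumr_ge0 => k _; rewrite mulr_ge0. Qed.

Lemma al_term i k : P i k * l k <= al i.
Proof.
rewrite /al (bigD1 k) //= lerDl; apply: sumr_ge0 => k' _; by rewrite mulr_ge0.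
Qed.

Lemma al_sum : \sum_i al i = 1.
Proof.
rewrite /al exchange_big /= -hls; apply: eq_bigr => k _.
by rewrite -mulr_suml hcol mul1r.
Qed.

Lemma A2 : \sum_i al i * ln (al i) <= \sum_k l k * ln (l k).
Proof.
have h1 : \sum_i \sum_k (P i k * l k - P i k * al i) <= \sum_i \sum_k P i k * l k * (ln (l k) - ln (al i)).
  apply: ler_sum => i _; apply: ler_sum => k _; apply/RleP; apply: T1.
  - exact/RleP. - exact/RleP. - exact/RleP/al_ge0. - exact/RleP/al_term.
have e1 : \sum_i \sum_k (P i k * l k - P i k * al i) = 0.
  apply: big1 => i _; rewrite sumrB -mulr_suml hrow mul1r; rewrite /al; exact: subrr.
have e2 : \sum_i \sum_k P i k * l k * (ln (l k) - ln (al i)) =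
   \sum_k l k * ln (l k) - \sum_i al i * ln (al i).
  under eq_bigr do (under eq_bigr do rewrite mulrBr; rewrite sumrB).
  rewrite sumrB exchange_big /=; congr (_ - _).
    apply: eq_bigr => k _; rewrite -[RHS]mul1r -(hcol k) mulr_suml; apply: eq_bigr => i _; ring.
  apply: eq_bigr => i _; rewrite /al mulr_suml; apply: eq_bigr => k _; ring.
by move: h1; rewrite e1 e2 subr_ge0.
Qed.

Lemma A3 : \sum_i al i * ln (q i) <= \sum_i al i * ln (al i).
Proof.
have h : \sum_i al i * (ln (q i) - ln (al i)) <= \sum_i (q i - al i).
  apply: ler_sum => i _; apply/RleP; apply: T2.
  - exact/RleP/al_ge0. - exact/RleP. - by move=> /RltP h; apply/RltP/hpos.
move: h; rewrite sumrB hqs al_sum subrr.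
under eq_bigr do rewrite mulrBr.
by rewrite sumrB subr_le0.
Qed.

Lemma ent_bound : \sum_i al i * Defs.log2 (q i * o) <= Defs.log2 o - \sum_k Defs.eta (l k).
Proof.
have e1 : \sum_i al i * Defs.log2 (q i * o) = (\sum_i al i * ln (q i) + ln o) / ln 2.
  rewrite (eq_bigr (fun i => (al i * ln (q i) + al i * ln o) / ln 2)); last first.
    move=> i _; apply: T3. exact/RleP/al_ge0. exact/RltP. by move=> /RltP h; apply/RltP/hpos.
  rewrite -mulr_suml big_split /= -mulr_suml al_sum mul1r //.
have e2 : \sum_k Defs.eta (l k) = - (\sum_k l k * ln (l k)) / ln 2.
  rewrite (eq_bigr (fun k => - (l k * ln (l k)) / ln 2)); last by move=> k _; rewrite (T4 (l k)) //; apply/RleP; exact: hl.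
  by rewrite -mulr_suml -sumrN.
rewrite e1 e2.
have h : Rle (\sum_i al i * ln (q i)) (\sum_k l k * ln (l k)).
  apply/RleP; exact: le_trans A3 A2.
have hl2 := ln2_pos.
rewrite /log2.
set X := \sum_i al i * ln (q i) in h *; set Z := \sum_k l k * ln (l k) in h *.
apply/RleP; change (Rle ((X + ln o) * / ln 2) (ln o * / ln 2 - (- Z * / ln 2))).
have := Rmult_le_compat_r (/ ln 2) (X + ln o) (ln o + Z) (Rlt_le _ _ (Rinv_0_lt_compat _ hl2)) ltac:(lra).
lra.
Qed.
End Ent.

End Part7.
Import Part7.

Module Part8.
Import Order.TTheory GRing.Theory Num.Theory.
Local Open Scope ring_scope. Local Open Scope complex_scope. Local Open Scope ring_scope.
Local Open Scope sesquilinear_scope.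

Lemma conj_realC (x : R) : (x%:C)^* = x%:C :> CC.
Proof. by apply: conj_Creal; rewrite complex_real. Qed.

Lemma Re_realM (x : R) (z : CC) : complex.Re (x%:C * z) = x * complex.Re z.
Proof. by case: z => a b /=; rewrite mul0r subr0. Qed.

Section PerJ.
Variables (n d : nat) (rho : Mat) (F : nat -> Mat) (j : nat).
Hypothesis hrho : density (n * d) rho.

Let bj := beta n d rho F j.
Let Sm : 'M[CC]_n := \matrix_(a < n, a' < n) sig d rho (F j) a a'.

Lemma mx_rhoAj : mx n (rhoA_j n d rho F j) = (/ bj)%:C *: Sm.
Proof. by apply/matrixP => a a'; rewrite !mxE rhoAj_entry. Qed.

Lemma rhoAj_herm : Defs.hermitian n (rhoA_j n d rho F j).
Proof.
apply/hermitianP; rewrite mx_rhoAj; apply/matrixP => a a'; rewrite !mxE.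
rewrite rmorphM /= conj_realC (@sig_herm n) //; exact: rherm_psd (proj1 hrho).
Qed.

Lemma decomp : exists U l, unitary n U /\
   meq n (rhoA_j n d rho F j) (mmul n U (mmul n (diag l) (adj U))) /\
   vN_entropy n (rhoA_j n d rho F j) = rsum n (fun k => Defs.eta (l k)).
Proof.
have [U [l [hU hm]]] := spectral_exists rhoAj_herm.
have ex : exists s, is_vn_entropy n (rhoA_j n d rho F j) s.
  by exists (rsum n (fun k => Defs.eta (l k))), U, l.
have := epsilon_spec (inhabits 0%R) _ ex; rewrite -/(vN_entropy _ _).
move=> [U' [l' [h1 [h2 h3]]]]; by exists U', l'.
Qed.

Lemma quad_ge0 (hb : (0 < bj)%R) (W : 'M[CC]_n) (i : 'I_n) :
  0 <= complex.Re ((W^t* *m mx n (rhoA_j n d rho F j) *m W) i i).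
Proof.
pose v x := if (insub x : option 'I_n) is Some a then W a i else 0.
have h := sig_psd (F j) v (proj1 hrho).
rewrite mx_rhoAj.
have -> : (W^t* *m ((/ bj)%:C *: Sm) *m W) i i =
   (/ bj)%:C * \sum_(a < n) \sum_(a' < n) (v a)^* * sig d rho (F j) a a' * v a'.
  rewrite !mxE mulr_sumr; under eq_bigr do rewrite !mxE.
  under eq_bigr do rewrite mulr_suml.
  rewrite exchange_big /=; apply: eq_bigr => a _.
  rewrite mulr_sumr; apply: eq_bigr => a' _; rewrite !mxE /v !valK; ring.
rewrite Re_realM; apply: mulr_ge0 => //; apply/RleP; apply: Rlt_le; apply: Rinv_0_lt_compat; exact/RltP.
Qed.

Lemma tr_Re (hb : (0 < bj)%R) : complex.Re (\tr (mx n (rhoA_j n d rho F j))) = 1.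
Proof.
rewrite mx_rhoAj /mxtrace; under eq_bigr do rewrite !mxE.
rewrite -mulr_sumr Re_realM Re_sum -beta_sig -/bj.
by rewrite mulVf // lt0r_neq0.
Qed.

Definition alphaE (e : nat -> nat -> Defs.C) i := Cre (trace n (mmul n (rhoA_j n d rho F j) (proj e i))).

Lemma alphaE_mx e (i : 'I_n) :
  alphaE e i = complex.Re (((Emx n (fun i k => tc (e i k)))^t* *m mx n (rhoA_j n d rho F j) *m Emx n (fun i k => tc (e i k))) i i).
Proof. by rewrite /alphaE -Re_tc alpha_mx. Qed.

Variables (U : Mat) (l : nat -> R).
Hypotheses (hU : unitary n U) (hm : meq n (rhoA_j n d rho F j) (mmul n U (mmul n (diag l) (adj U)))).
Let V := mx n U.
Let lr := \row_(k < n) (l k)%:C : 'rV[CC]_n.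
Lemma hV : V^t* *m V = 1%:M. Proof. exact/unitaryP. Qed.
Lemma hVs : V *m V^t* = 1%:M. Proof. exact/unitary_sym/hV. Qed.
Lemma hR : mx n (rhoA_j n d rho F j) = V *m diag_mx lr *m V^t*.
Proof. by move/meqP: hm; rewrite !mx_mmul mx_adj mx_diag mulmxA. Qed.

Lemma VRV : V^t* *m mx n (rhoA_j n d rho F j) *m V = diag_mx lr.
Proof.
rewrite hR !mulmxA hV mul1mx -!mulmxA hV mulmx1 //.
Qed.

Lemma l_eq (k : 'I_n) : complex.Re ((V^t* *m mx n (rhoA_j n d rho F j) *m V) k k) = l k.
Proof. by rewrite VRV !mxE eqxx mulr1n. Qed.

Lemma l_ge0 (hb : (0 < bj)%R) (k : 'I_n) : 0 <= l k.
Proof. rewrite -l_eq; exact: quad_ge0. Qed.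

Lemma l_sum (hb : (0 < bj)%R) : \sum_(k < n) l k = 1.
Proof.
rewrite -(tr_Re hb).
have -> : \tr (mx n (rhoA_j n d rho F j)) = \tr (V^t* *m mx n (rhoA_j n d rho F j) *m V).
  by rewrite mxtrace_mulC mulmxA hVs mul1mx.
rewrite /mxtrace Re_sum; apply: eq_bigr => k _; exact/esym/l_eq.
Qed.

Lemma Re_nsq (z : CC) : 0 <= complex.Re (z * z^*).
Proof. by case: z => a b; rewrite conjC_complex /= mulrN opprK addr_ge0 // -expr2 sqr_ge0. Qed.

Lemma diag_quad (Y : 'M[CC]_n) (i : 'I_n) :
  (Y *m diag_mx lr *m Y^t*) i i = \sum_(k < n) (l k)%:C * (Y i k * (Y i k)^*).
Proof.
rewrite !mxE; apply: eq_bigr => k _; rewrite !mxE.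
rewrite (bigD1 k) //= big1 ?addr0 => [|k' hk]; last by rewrite !mxE (negbTE hk) mulr0n mulr0.
by rewrite !mxE eqxx mulr1n; ring.
Qed.

Lemma upper_j (hb : (0 < bj)%R) o (ho : (0 < o)%R) (e : nat -> nat -> Defs.C) (q : nat -> R) :
  onb n e -> (forall i : 'I_n, 0 <= q i) -> \sum_(i < n) q i = 1 ->
  (forall i : 'I_n, 0 < alphaE e i -> 0 < q i) ->
  \sum_(i < n) alphaE e i * Defs.log2 (q i * o) <= Defs.log2 o - \sum_(k < n) Defs.eta (l k).
Proof.
move=> /onbP hE hq hqs hpos.
set Em := Emx n (fun i k => tc (e i k)) in hE.
have hEs : Em *m Em^t* = 1%:M by apply: unitary_sym.
set Y := Em^t* *m V.
have hY : Em^t* *m mx n (rhoA_j n d rho F j) *m Em = Y *m diag_mx lr *m Y^t*.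
  by rewrite hR /Y trmx_mul map_mxM trmxCK !mulmxA.
pose P (i k : 'I_n) := complex.Re (Y i k * (Y i k)^*).
have hal : forall i : 'I_n, alphaE e i = \sum_(k < n) P i k * l k.
  move=> i; rewrite alphaE_mx -/Em hY diag_quad Re_sum; apply: eq_bigr => k _.
  by rewrite Re_realM mulrC.
have hrow : forall i, \sum_k P i k = 1.
  move=> i; have : (Y *m Y^t*) i i = 1.
    by rewrite /Y trmx_mul map_mxM trmxCK mulmxA -(mulmxA _ V) hVs mulmx1 hE mxE eqxx.
  rewrite mxE => e1; rewrite /P -Re_sum.
  by rewrite (eq_bigr (fun k => Y i k * (Y^t*) k i)) ?e1 // => k _; rewrite !mxE.
have hcol : forall k, \sum_i P i k = 1.
  move=> k; have : (Y^t* *m Y) k k = 1.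
    by rewrite /Y trmx_mul map_mxM trmxCK mulmxA -(mulmxA _ Em) hEs mulmx1 hV mxE eqxx.
  rewrite mxE => e1; rewrite /P -Re_sum.
  by rewrite (eq_bigr (fun i => (Y^t*) k i * Y i k)) ?e1 // => i _; rewrite !mxE mulrC.
under eq_bigr do rewrite hal.
apply: (@ent_bound n P (fun k => l k) (fun i => q i) o ho) => //.
- by move=> i k; exact: Re_nsq.
- by move=> k; exact: l_ge0.
- exact: l_sum.
- by move=> i h; apply: hpos; rewrite hal.
Qed.

Lemma achieve_j (hb : (0 < bj)%R) :
  exists e : nat -> nat -> Defs.C, onb n e /\ (forall i : 'I_n, alphaE e i = l i).
Proof.
exists (fun i k => unmx V k i).
have hEm : Emx n (fun i k => tc (unmx V k i)) = V.
  by apply/matrixP => k i; rewrite !mxE /unmx !valK ofcK /V !mxE.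
split; first by apply/onbP; rewrite hEm hV.
by move=> i; rewrite alphaE_mx hEm l_eq.
Qed.
End PerJ.

End Part8.
Import Part8.

Module Part9.
Import Order.TTheory GRing.Theory Num.Theory.
Local Open Scope ring_scope. Local Open Scope complex_scope. Local Open Scope ring_scope.
Local Open Scope sesquilinear_scope.

Definition Tsum n d rho m F := rsum m (fun j => beta n d rho F j * vN_entropy n (rhoA_j n d rho F j)).

Lemma Tsum_split n d rho m F o : density (n * d) rho -> meas_ops d m F ->
  Defs.log2 o - Tsum n d rho m F =
  \sum_(j < m) beta n d rho F j * (Defs.log2 o - vN_entropy n (rhoA_j n d rho F j)).
Proof.
move=> hr hm; rewrite /Tsum rsumE.
rewrite [in LHS](_ : Defs.log2 o = Defs.log2 o * rsum m (beta n d rho F)); last by rewrite (sum_beta hr hm) mulr1.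
rewrite rsumE mulr_sumr -sumrB.
by apply: eq_bigr => j _; ring.
Qed.

Lemma rate_le n d rho o m F e q : density (n * d) rho -> (0 < o)%R -> meas_ops d m F ->
  (forall j, (j < m)%coq_nat -> onb n (e j)) -> betting n m q -> finite_rate n d rho m F e q ->
  doubling_rate n d rho o m F e q <= Defs.log2 o - Tsum n d rho m F.
Proof.
move=> hr ho hm he [hq1 hq2] hf.
rewrite Tsum_split // /doubling_rate rsumE; apply: ler_sum => j _.
have hb := beta_ge0 F j (proj1 hr).
case: (boolP (0 < beta n d rho F j)) => hbp; last first.
  move: hb; rewrite le_eqVlt (negbTE hbp) orbF => /eqP <-.
  by rewrite !RmultE !mul0r.
rewrite RmultE; apply: ler_wpM2l; first exact: hb.
have [U [l [hU [hmm hS]]]] := decomp F j hr.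
rewrite hS rsumE rsumE.
have hj : (j < m)%coq_nat by apply/ssrnat.ltP.
apply: (@upper_j n d rho F j hr U l hU hmm hbp o ho (e j) (fun i => q i j)).
- exact: he.
- by move=> i; apply/RleP; apply: hq1 => //; apply/ssrnat.ltP.
- by rewrite -(@rsumE n (fun i => q i j)) (hq2 j hj).
- move=> i hai; apply/RltP; apply: hf => //; first by apply/ssrnat.ltP.
  by apply/RltP; apply: mulr_gt0.
Qed.

Lemma per_j_ach n d rho o F j : density (n * d) rho -> (0 < o)%R ->
  exists p : (nat -> nat -> Defs.C) * (nat -> R),
    onb n p.1 /\ (forall i, (i < n)%coq_nat -> (0 <= p.2 i)%R) /\ rsum n p.2 = 1%R /\
    (forall i, (i < n)%coq_nat -> (0 < beta n d rho F j * alphaE n d rho F j p.1 i)%R -> (0 < p.2 i)%R) /\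
    Rmult (beta n d rho F j) (rsum n (fun i => Rmult (alphaE n d rho F j p.1 i) (Defs.log2 (p.2 i * o)))) =
    beta n d rho F j * (Defs.log2 o - vN_entropy n (rhoA_j n d rho F j)).
Proof.
move=> hr ho.
have hb := beta_ge0 F j (proj1 hr).
case: (boolP (0 < beta n d rho F j)) => hbp; last first.
  have hn := @n_pos n d rho hr.
  exists ((fun i k => idm i k), (fun _ => / INR n)%R) => /=; split; [|split; [|split; [|split]]].
  - apply/onbP; have -> : Emx n (fun i k => tc (idm i k)) = 1%:M.
      by apply/matrixP => k i; rewrite !mxE tc_idm eq_sym.
    by rewrite trmx1 map_mx1 mulmx1.
  - move=> i _; apply/RleP; apply: Rlt_le; apply: Rinv_0_lt_compat; apply: lt_0_INR.
    exact: hn.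
  - rewrite rsum_const; apply: Rinv_r; apply: not_0_INR; lia.
  - move: hb; rewrite le_eqVlt (negbTE hbp) orbF => /eqP <- i _.
    by rewrite mul0r ltxx.
  - move: hb; rewrite le_eqVlt (negbTE hbp) orbF => /eqP <-.
    by rewrite !RmultE !mul0r.
have [U [l [hU [hmm hS]]]] := decomp F j hr.
have [e [he hal]] := achieve_j hU hmm hbp.
exists (e, l) => /=; split; [done|split; [|split; [|split]]].
- move=> i /ssrnat.ltP hi; exact: (l_ge0 hr hU hmm hbp (Ordinal hi)).
- rewrite rsumE; exact: (l_sum hU hmm hbp).
- move=> i /ssrnat.ltP hi; rewrite (hal (Ordinal hi)) => h.
  by move: h; rewrite pmulr_rgt0.
- rewrite hS RmultE; congr (_ * _); rewrite !rsumE.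
  transitivity (\sum_(i < n) (l i * Defs.log2 o - Defs.eta (l i))).
    apply: eq_bigr => i _; rewrite hal; apply: T5; last exact/RltP.
    exact/RleP/(l_ge0 hr hU hmm hbp).
  by rewrite sumrB -mulr_suml (l_sum hU hmm hbp) mul1r.
Qed.

Lemma rate_ach n d rho o m F : density (n * d) rho -> (0 < o)%R -> meas_ops d m F ->
  RateSet n d rho o (Defs.log2 o - Tsum n d rho m F).
Proof.
move=> hr ho hm.
pose pf j := proj1_sig (constructive_indefinite_description _ (@per_j_ach n d rho o F j hr ho)).
have hpf j := proj2_sig (constructive_indefinite_description _ (@per_j_ach n d rho o F j hr ho)).
exists m, F, (fun j => (pf j).1), (fun i j => (pf j).2 i).
split; first exact: hm.
split; first by move=> j _; case: (hpf j).
split; first split.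
- by move=> i j hi _; case: (hpf j) => _ [h _]; apply/RleP; exact: (h i hi).
- move=> j _; case: (hpf j) => _ [_ [h _]]; exact: (etrans h (esym R1E)).
split.
- move=> i j hi _ /RltP h; case: (hpf j) => _ [_ [_ [h' _]]]; apply/RltP; exact: (h' i hi h).
- rewrite RminusE Tsum_split // /doubling_rate rsumE; apply: eq_bigr => j _.
  by case: (hpf j) => _ [_ [_ [_ ->]]].
Qed.

End Part9.
Import Part9.

Module Part10.
Import Order.TTheory GRing.Theory Num.Theory.
Open Scope R_scope.

Lemma rate_le' n d rho o m F e q : density (n * d)%nat rho -> 0 < o -> meas_ops d m F ->
  (forall j, (j < m)%coq_nat -> onb n (e j)) -> betting n m q -> finite_rate n d rho m F e q ->
  doubling_rate n d rho o m F e q <=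
    log2 o - rsum m (fun j => beta n d rho F j * vN_entropy n (rhoA_j n d rho F j)).
Proof.
move=> hr ho hm he hb hf; apply/RleP.
have := rate_le hr (introT (@RltP _ _) ho) hm he hb hf. by [].
Qed.

Lemma rate_ach' n d rho o m F : density (n * d)%nat rho -> 0 < o -> meas_ops d m F ->
  RateSet n d rho o (log2 o - rsum m (fun j => beta n d rho F j * vN_entropy n (rhoA_j n d rho F j))).
Proof. move=> hr ho hm; exact: (rate_ach hr (introT (@RltP _ _) ho) hm). Qed.


End Part10.
Import Part10.
Import Order.TTheory GRing.Theory Num.Theory.
Open Scope R_scope.

Theorem mainTheorem3 (n d : nat) (rho : Mat) (o : R) :
  density (n * d)%nat rho -> 0 < o ->
  forall W : R,
    is_lub (RateSet n d rho o) W <->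
    is_lub (GainSet n d rho) (W - W_A_star n d rho o).
Proof.
move=> hr ho.
have ub : forall u, is_upper_bound (RateSet n d rho o) u <->
                    is_upper_bound (GainSet n d rho) (u - W_A_star n d rho o).
  move=> u; split => hu x hx.
  - case: hx => m [F [hm ->]].
    have := hu _ (rate_ach' hr ho hm); rewrite /W_A_star; lra.
  - case: hx => m [F [e [q [hm [he [hb [hf ->]]]]]]].
    have h1 := rate_le' hr ho hm he hb hf.
    have h2 := hu _ (ex_intro _ m (ex_intro _ F (conj hm erefl))).
    move: h1 h2; rewrite /W_A_star; lra.
move=> W; split.
- case=> h1 h2; split; first exact/ub.
  move=> b hb; have := h2 (b + W_A_star n d rho o).
  rewrite ub (_ : b + W_A_star n d rho o - W_A_star n d rho o = b); last lra.
  move=> /(_ hb); lra.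
- case=> h1 h2; split; first by apply/ub.
  move=> b hb; have := h2 (b - W_A_star n d rho o) (proj1 (ub b) hb); lra.
Qed.
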